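(* Let $G$ be a connected split graph with no universal vertex. Then the cutset hypergraph of $G$ equals the neighborhood hypergraph of $G$; that is, a set $S\subseteq V(G)$ is a minimal cutset of $G$ if and only if $S$ is an inclusion-wise minimal member of the family $\{N(v):v\in V(G)\}$.
   Context: A graph is split if its vertex set can be partitioned into a clique and an independent set. A universal vertex is a vertex adjacent to all other vertices. $N(v)$ denotes the (open) neighborhood of $v$. A cutset of $G$ is a set $S\subseteq V(G)$ such that $G-S$ is disconnected; it is minimal if it contains no other cutset. The cutset hypergraph of $G$ has vertex set $V(G)$ and hyperedges the minimal cutsets; the neighborhood hypergraph of $G$ has vertex set $V(G)$ and hyperedges the inclusion-wise minimal sets in $\{N(v):v\in V(G)\}$. *)

(* Defs.v *)
From mathcomp Require Import all_boot.
Set Implicit Arguments. Unset Strict Implicit. Unset Printing Implicit Defensive.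

Definition simple_graph (T : finType) (e : rel T) : Prop :=
  symmetric e /\ irreflexive e.

Definition del_rel (T : finType) (e : rel T) (S : {set T}) : rel T :=
  fun x y => [&& x \notin S, y \notin S & e x y].

Definition connected_graph (T : finType) (e : rel T) : Prop :=
  (0 < #|T|) /\ forall x y : T, connect e x y.

Definition is_cutset (T : finType) (e : rel T) (S : {set T}) : Prop :=
  exists x y : T, [/\ x \notin S, y \notin S & ~~ connect (del_rel e S) x y].

Definition is_min_cutset (T : finType) (e : rel T) (S : {set T}) : Prop :=
  is_cutset e S /\ forall S' : {set T}, S' \proper S -> ~ is_cutset e S'.

Definition nbhd (T : finType) (e : rel T) (v : T) : {set T} := [set u | e v u].

Definition is_min_nbhd (T : finType) (e : rel T) (S : {set T}) : Prop :=
  (exists v : T, S = nbhd e v) /\ forall w : T, ~ (nbhd e w \proper S).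

Definition is_clique (T : finType) (e : rel T) (K : {set T}) : Prop :=
  forall x y, x \in K -> y \in K -> x != y -> e x y.

Definition is_independent (T : finType) (e : rel T) (I : {set T}) : Prop :=
  forall x y, x \in I -> y \in I -> ~~ e x y.

Definition split_graph (T : finType) (e : rel T) : Prop :=
  exists K I : {set T},
    [/\ K :&: I = set0, K :|: I = setT, is_clique e K & is_independent e I].

Definition universal (T : finType) (e : rel T) (v : T) : Prop :=
  forall u, u != v -> e v u.

(* Main.v *)
Require Import Defs.
From mathcomp Require Import all_boot.
From Stdlib Require Import Classical.
Set Implicit Arguments. Unset Strict Implicit. Unset Printing Implicit Defensive.

Section Aux.
Variables (T : finType) (e : rel T).

Lemma del_sym S : symmetric e -> symmetric (del_rel e S).
Proof. by move=> se x y; rewrite /del_rel se; by case: (x \in S) (y \in S) => [] []. Qed.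

Lemma nbhd_cut v : irreflexive e -> ~ universal e v -> is_cutset e (nbhd e v).
Proof.
move=> ir nu.
have [u [uv nvu]] : exists u, u != v /\ ~~ e v u.
  apply: NNPP => H; apply: nu => u uv.
  apply: NNPP => H2; apply: H; exists u; split => //; exact/negP.
exists v, u; split; rewrite ?inE ?ir //.
apply/negP => /connectP [[|z p] /=] .
  by move=> _ E; rewrite E eqxx in uv.
by case/andP => /and3P [_ /negP zn evz]; rewrite inE evz in zn.
Qed.

Lemma cut_nbhd S : simple_graph e -> split_graph e -> is_cutset e S ->
  exists w, nbhd e w \subset S.
Proof.
move=> [se ir] [K [I [KI KUI cK iI]]] [x [y [xS yS nc]]].
have inKI z : (z \in K) || (z \in I) by rewrite -in_setU KUI inE.
have reach z : z \notin S -> ~~ (nbhd e z \subset S) ->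
   exists a, [/\ a \in K, a \notin S & connect (del_rel e S) z a].
  move=> zS /subsetPn [u]; rewrite inE => ezu uS.
  case/orP: (inKI z) => zK; first by exists z; split => //; exact: connect0.
  case/orP: (inKI u) => uK.
    exists u; split => //; apply: connect1; by rewrite /del_rel zS uS ezu.
  by move: (iI _ _ zK uK); rewrite ezu.
case: (boolP (nbhd e x \subset S)) => hx; first by exists x.
case: (boolP (nbhd e y \subset S)) => hy; first by exists y.
have [a [aK aS ca]] := reach x xS hx.
have [b [bK bS cb]] := reach y yS hy.
exfalso; move/negP: nc; apply.
apply: connect_trans ca _.
have cab : connect (del_rel e S) a b.
  case: (eqVneq a b) => [->|ab]; first exact: connect0.
  by apply: connect1; rewrite /del_rel aS bS cK.
apply: connect_trans cab _.
by rewrite (sym_connect_sym (del_sym S se)).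
Qed.

End Aux.

Theorem mainTheorem4 (T : finType) (e : rel T) :
  simple_graph e -> connected_graph e -> split_graph e ->
  (forall v : T, ~ universal e v) ->
  forall S : {set T}, is_min_cutset e S <-> is_min_nbhd e S.
Proof.
move=> sg _ spl nu S; have [se ir] := sg; split.
- move=> [cS mS].
  have [w sub] := cut_nbhd sg spl cS.
  have Ew : S = nbhd e w.
    apply/eqP; rewrite eq_sym eqEproper sub /=; apply/negP => pr.
    exact: (mS _ pr (nbhd_cut ir (nu w))).
  split; first by exists w.
  by move=> w' pr; apply: (mS _ pr (nbhd_cut ir (nu w'))).
- move=> [[v ->] mN]; split; first exact: nbhd_cut.
  move=> S' pr cS'.
  have [w sub] := cut_nbhd sg spl cS'.
  apply: (mN w); exact: sub_proper_trans sub pr.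
Qed.
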